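(* Let $\mathcal{T}$ be a collection of tests on $[n]$ that is a test cover, and let $\mathcal{T}^*$ be obtained from $\mathcal{T}$ by adding every singleton $\{i\}$, $i\in[n]$, not already in $\mathcal{T}$. Then for every positive integer $k$, $\mathcal{T}^*$ contains a $k$-mini test cover if and only if $\mathcal{T}$ contains a $k$-mini test cover.
   Context: Items are the elements of $[n]$; a test is a subset of $[n]$. A test $T$ separates $i\neq j$ if $|\{i,j\}\cap T|=1$; a subcollection is a test cover if it separates every pair of distinct items. The classes induced by $\mathcal{T}'\subseteq\mathcal{T}$ are the equivalence classes of the relation ''$i,j$ are not separated by any test of $\mathcal{T}'$''. A $k$-mini test cover of $\mathcal{T}$ is a subcollection $\mathcal{T}'\subseteq\mathcal{T}$ with $|\mathcal{T}'|\le 2k$ inducing at least $|\mathcal{T}'|+k$ classes. *)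

(* Defs.v *)
From mathcomp Require Import all_boot.
Set Implicit Arguments. Unset Strict Implicit. Unset Printing Implicit Defensive.

Definition separates (n : nat) (T : {set 'I_n}) (i j : 'I_n) : bool :=
  (i \in T) != (j \in T).

Definition test_cover (n : nat) (C : {set {set 'I_n}}) : Prop :=
  forall i j : 'I_n, i != j -> exists2 T, T \in C & separates T i j.

Definition unsep (n : nat) (C : {set {set 'I_n}}) (i j : 'I_n) : bool :=
  [forall T in C, ~~ separates T i j].

Definition induced_classes (n : nat) (C : {set {set 'I_n}}) : {set {set 'I_n}} :=
  [set [set j | unsep C i j] | i : 'I_n].

Definition num_classes (n : nat) (C : {set {set 'I_n}}) : nat :=
  #|induced_classes C|.

Definition mini_test_cover (n k : nat) (C C' : {set {set 'I_n}}) : Prop :=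
  C' \subset C /\ #|C'| <= 2 * k /\ #|C'| + k <= num_classes C'.

Definition has_mini_test_cover (n k : nat) (C : {set {set 'I_n}}) : Prop :=
  exists C', mini_test_cover k C C'.

Definition add_singletons (n : nat) (C : {set {set 'I_n}}) : {set {set 'I_n}} :=
  C :|: [set [set i] | i : 'I_n].

(* Main.v *)
Require Import Defs.
From mathcomp Require Import all_boot.
From mathcomp Require Import zify.
Set Implicit Arguments. Unset Strict Implicit.

Lemma unsepU1 (n : nat) (T : {set 'I_n}) D j l :
  unsep (T |: D) j l = ~~ separates T j l && unsep D j l.
Proof.
apply/forall_inP/andP => [H|[H1 /forall_inP H2] U].
  split; first by apply: H; exact: setU11.
  by apply/forall_inP => U UD; apply: H; rewrite setU1r.
by rewrite in_setU1 => /orP[/eqP->//|]; exact: H2.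
Qed.

Lemma unsep_refl (n : nat) (D : {set {set 'I_n}}) i : unsep D i i.
Proof. by apply/forall_inP => U _; rewrite /separates eqxx. Qed.

Lemma classes_single (n : nat) (D : {set {set 'I_n}}) i :
  num_classes ([set i] |: D) <= (num_classes D).+1.
Proof.
rewrite /num_classes.
have sub : induced_classes ([set i] |: D) \subset
   [set i] |: [set c :\ i | c in induced_classes D].
  apply/subsetP => c /imsetP [j _ ->].
  have [ji|ji] := eqVneq j i.
    apply/setU1P; left; apply/setP => l.
    rewrite !inE unsepU1 /separates !inE ji eqxx.
    case: (eqVneq l i) => [->|]; last by [].
    by rewrite unsep_refl.
  apply/setU1P; right; apply/imsetP; exists [set l | unsep D j l].
    by apply/imsetP; exists j.
  apply/setP => l; rewrite !inE unsepU1 /separates !inE (negbTE ji).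
  by case: (l == i).
apply: (leq_trans (subset_leq_card sub)).
rewrite cardsU1 -add1n; apply: leq_add; first by case: (_ \notin _).
exact: leq_imset_card.
Qed.

Lemma reduce (n : nat) (C : {set {set 'I_n}}) m : forall D : {set {set 'I_n}},
  #|D| <= m -> D \subset add_singletons C ->
  exists E : {set {set 'I_n}}, [/\ E \subset C, #|E| <= #|D| &
     num_classes D <= num_classes E + (#|D| - #|E|)].
Proof.
elim: m => [|m IH] D hD sD.
  move: hD; rewrite leqn0 cards_eq0 => /eqP ->.
  exists set0; split; [exact: sub0set | by [] | rewrite subnn addn0 //].
have [/eqP e|[S SD]] := set_0Vmem (D :\: C).
  exists D; split; [by rewrite -setD_eq0 e | by [] | by rewrite subnn addn0].
move: SD; rewrite inE => /andP [SC SDD].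
have := subsetP sD S SDD; rewrite /add_singletons inE (negbTE SC) /= => /imsetP [i _ Si].
have hD0 : #|D :\ S| <= m by move: hD; rewrite (cardsD1 S D) SDD /=; lia.
have [E [EC ED0 cl]] := IH (D :\ S) hD0 (subset_trans (subsetDl _ _) sD).
exists E; split => //.
  by move: ED0; rewrite (cardsD1 S D) SDD /=; lia.
have := classes_single (D :\ S) i.
rewrite -Si setD1K //.
move: ED0 cl; rewrite (cardsD1 S D) SDD /=; lia.
Qed.

Theorem mainTheorem8 (n : nat) (C : {set {set 'I_n}}) (k : nat) :
  test_cover C -> 0 < k ->
  (has_mini_test_cover k (add_singletons C) <-> has_mini_test_cover k C).
Proof.
move=> _ _; split.
  move=> [D [sD [h1 h2]]].
  have [E [EC ED cl]] := reduce (leqnn #|D|) sD.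
  exists E; split => //; split; lia.
move=> [D [sD [h1 h2]]]; exists D; split => //.
by apply: (subset_trans sD); exact: subsetUl.
Qed.
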